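(* Let $\mathcal{B}$ be a real Banach space having a smooth pre-dual space $\mathcal{B}_*$, let $\nu_j\in\mathcal{B}_*$, $j\in\mathbb{N}_m$, be linearly independent, and let $\mathbf{y}=[y_j:j\in\mathbb{N}_m]\in\mathbb{R}^m$. For $\mathbf{c}\in\mathbb{R}^m$ put $\mathcal{L}^*(\mathbf{c}):=\sum_{j\in\mathbb{N}_m}c_j\nu_j$. Then $$\hat f:=\|\mathcal{L}^*(\mathbf{c})\|_{\mathcal{B}_*}\,\mathcal{G}_*(\mathcal{L}^*(\mathbf{c}))$$ is a solution of the minimum norm interpolation problem with data $\mathbf{y}$ if and only if $\mathbf{c}$ solves the system $$\big\langle\nu_k,\ \|\mathcal{L}^*(\mathbf{c})\|_{\mathcal{B}_*}\mathcal{G}_*(\mathcal{L}^*(\mathbf{c}))\big\rangle_{\mathcal{B}}=y_k,\quad k\in\mathbb{N}_m.$$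
   Context: $\mathcal{B}$ is a real Banach space with dual $\mathcal{B}^*$ and pairing $\langle\nu,f\rangle_{\mathcal{B}}:=\nu(f)$; $\mathbb{N}_m:=\{1,\dots,m\}$; $\mathcal{L}(f):=[\langle\nu_j,f\rangle_{\mathcal{B}}:j\in\mathbb{N}_m]$ (so $\mathcal{L}^*$ above is its adjoint), $\mathcal{M}_{\mathbf{y}}:=\{f\in\mathcal{B}:\mathcal{L}(f)=\mathbf{y}\}$; a solution of the minimum norm interpolation problem with data $\mathbf{y}$ is an $\hat f\in\mathcal{M}_{\mathbf{y}}$ with $\|\hat f\|_{\mathcal{B}}=\inf\{\|f\|_{\mathcal{B}}:f\in\mathcal{M}_{\mathbf{y}}\}$. A normed space $\mathcal{B}_*$ is a pre-dual of $\mathcal{B}$ if $(\mathcal{B}_* )^*=\mathcal{B}$, with $\langle\nu,f\rangle_{\mathcal{B}}=f(\nu)$ for $\nu\in\mathcal{B}_*$. $\mathcal{B}_*$ smooth means its norm is Gâteaux differentiable at every nonzero $\nu$; $\mathcal{G}_*(\nu)\in(\mathcal{B}_* )^*=\mathcal{B}$ denotes the Gâteaux derivative of $\|\cdot\|_{\mathcal{B}_*}$ at $\nu\neq0$, i.e. $\mathcal{G}_*(\nu)(\mu)=\lim_{t\to0}(\|\nu+t\mu\|_{\mathcal{B}_*}-\|\nu\|_{\mathcal{B}_*})/t$, and $\mathcal{G}_*(0):=0$. *)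

(* Defs.v *)
From HB Require Import structures.
From mathcomp Require Import all_boot all_order all_algebra.
From mathcomp Require Import all_classical all_reals all_analysis.
Set Implicit Arguments.
Unset Strict Implicit.
Unset Printing Implicit Defensive.
Import Order.TTheory GRing.Theory Num.Theory.
Import numFieldNormedType.Exports.
Local Open Scope classical_set_scope.
Local Open Scope ring_scope.

(* The pre-dual B_* is modelled as a real normed space V; the Banach space
   B = (B_* )^* is modelled as the bounded linear functionals V -> R with the
   dual (operator) norm; the pairing <nu, f>_B is f nu. *)
Section Defs.
Context {R : realType} {V : normedModType R}.

Definition bounded_linear_functional (f : V -> R) : Prop :=
  (forall (a : R) (x y : V), f (a *: x + y) = a * f x + f y) /\
  exists M : R, forall x : V, `|f x| <= M * `|x|.

Definition dual_norm (f : V -> R) : R :=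
  sup [set `|f x| | x in [set x : V | `|x| <= 1]].

Definition gateaux_quotient (nu mu : V) (t : R) : R :=
  (`|nu + t *: mu| - `|nu|) / t.

Definition gateaux_norm_deriv (nu : V) : V -> R :=
  if nu == 0 then (fun _ => 0)
  else fun mu => lim (gateaux_quotient nu mu @ (0 : R)^').

Definition smooth_space : Prop :=
  forall nu : V, nu != 0 ->
    (forall mu : V, cvg (gateaux_quotient nu mu @ (0 : R)^')) /\
    bounded_linear_functional (gateaux_norm_deriv nu).

Definition lin_indep (m : nat) (nu : 'I_m -> V) : Prop :=
  forall c : 'I_m -> R, \sum_(j < m) c j *: nu j = 0 -> forall j, c j = 0.

Definition Lstar (m : nat) (nu : 'I_m -> V) (c : 'I_m -> R) : V :=
  \sum_(j < m) c j *: nu j.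

Definition interp_set (m : nat) (nu : 'I_m -> V) (y : 'I_m -> R) : set (V -> R) :=
  [set f | bounded_linear_functional f /\ forall j, f (nu j) = y j].

Definition is_min_norm_interp (m : nat) (nu : 'I_m -> V) (y : 'I_m -> R)
  (fhat : V -> R) : Prop :=
  interp_set nu y fhat /\
  dual_norm fhat = inf [set dual_norm f | f in interp_set nu y].

End Defs.

(* Main.v *)
Require Import Defs.
From HB Require Import structures.
From mathcomp Require Import all_boot all_order all_algebra.
From mathcomp Require Import all_classical all_reals all_analysis.
From mathcomp Require Import lra.
Import Order.TTheory GRing.Theory Num.Theory.
Import numFieldNormedType.Exports.
Local Open Scope classical_set_scope.
Local Open Scope ring_scope.
Section S.
Context {R : realType} {V : normedModType R}.
Lemma gq_bound (nu mu : V) t : `|gateaux_quotient nu mu t| <= `|mu|.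
Proof.
rewrite /gateaux_quotient.
have [->|t0] := eqVneq t 0; first by rewrite invr0 mulr0 normr0.
rewrite normrM normfV ler_pdivrMr ?normr_gt0 //.
apply: le_trans (ler_dist_dist _ _) _.
rewrite addrC addKr normrZ mulrC.
done.
Qed.
Lemma q_self (nu : V) : \forall t \near (0:R)^', gateaux_quotient nu nu t = `|nu|.
Proof.
near=> t.
have t0 : t != 0 by near: t; exact: nbhs_dnbhs_neq.
have t1 : `|t| < 1.
  near: t; apply: nbhs_dnbhs; exists 1 => //= z; by rewrite /ball /= sub0r normrN.
rewrite /gateaux_quotient.
have -> : nu + t *: nu = (1 + t) *: nu by rewrite scalerDl scale1r.
rewrite normrZ.
have -> : `|1 + t| = 1 + t.
  apply/ger0_norm. move: t1; rewrite ltr_norml. case/andP => h _. lra.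
by rewrite (mulrDl 1 t) mul1r addrC addKr mulrC mulKf.
Unshelve. all: by end_near.
Qed.

Lemma lin0 (f : V -> R) : (forall (a : R) (x y : V), f (a *: x + y) = a * f x + f y) -> f 0 = 0.
Proof. move=> hf; have h := hf 1 0 0; rewrite scale1r addr0 mul1r in h.
by apply: (addIr (f 0)); rewrite add0r -h. Qed.
Lemma linZ (f : V -> R) : (forall (a : R) (x y : V), f (a *: x + y) = a * f x + f y) ->
  forall a x, f (a *: x) = a * f x.
Proof. by move=> hf a x; have := hf a x 0; rewrite addr0 (lin0 f hf) addr0. Qed.
Lemma linS (f : V -> R) : (forall (a : R) (x y : V), f (a *: x + y) = a * f x + f y) ->
  forall m (c : 'I_m -> R) (nu : 'I_m -> V), f (\sum_(j < m) c j *: nu j) = \sum_(j < m) c j * f (nu j).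
Proof. move=> hf m c nu; elim/big_rec2: _ => [|j a b _ <-]; first exact: (lin0 f hf).
by rewrite hf. Qed.

Lemma G_lin (nu : V) : smooth_space (V:=V) -> bounded_linear_functional (gateaux_norm_deriv nu).
Proof.
move=> sm; have [->|nu0] := eqVneq nu 0; last exact: (sm nu nu0).2.
rewrite /gateaux_norm_deriv eqxx; split; first by move=> *; rewrite mulr0 addr0.
by exists 0 => x; rewrite normr0 mul0r.
Qed.

Lemma G_bound (nu mu : V) : smooth_space (V:=V) -> `|gateaux_norm_deriv nu mu| <= `|mu|.
Proof.
move=> sm; rewrite /gateaux_norm_deriv; case: ifPn => [_|nu0]; first by rewrite normr0.
have cv := (sm nu nu0).1 mu.
rewrite ler_norml; apply/andP; split.
  apply: limr_ge => //; apply: nearW => t.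
  by have := gq_bound nu mu t; rewrite ler_norml => /andP[].
apply: limr_le => //; apply: nearW => t.
by have := gq_bound nu mu t; rewrite ler_norml => /andP[].
Qed.

Lemma G_self (nu : V) : smooth_space (V:=V) -> nu != 0 -> gateaux_norm_deriv nu nu = `|nu|.
Proof.
move=> sm nu0; rewrite /gateaux_norm_deriv (negbTE nu0).
apply: lim_near_cst; [exact: Rhausdorff | exact: (q_self nu)].
Qed.

Lemma dual_le (f : V -> R) K : 0 <= K -> (forall x, `|f x| <= K * `|x|) -> dual_norm f <= K.
Proof.
move=> K0 hK; apply: ge_sup.
  by exists `|f 0|, 0 => //=; rewrite normr0.
move=> _ [x /= x1 <-]; apply: le_trans (hK x) _.
by rewrite -{2}(mulr1 K) ler_wpM2l.
Qed.

Lemma dual_ge (f : V -> R) x : bounded_linear_functional f -> `|x| <= 1 -> `|f x| <= dual_norm f.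
Proof.
move=> [_ [M hM]] x1; apply: ub_le_sup; last by exists x.
exists `|M| => _ [z /= z1 <-]; apply: le_trans (hM z) _.
apply: le_trans (ler_norm _) _; rewrite normrM normr_id.
by rewrite -[X in _ <= X]mulr1 ler_wpM2l.
Qed.
End S.

Theorem mainTheorem9 (R : realType) (V : normedModType R) (m : nat)
  (nu : 'I_m -> V) (y : 'I_m -> R) (c : 'I_m -> R) :
  smooth_space (V := V) ->
  lin_indep nu ->
  is_min_norm_interp nu y
    (fun mu => `|Lstar nu c| * gateaux_norm_deriv (Lstar nu c) mu) <->
  (forall k : 'I_m,
     `|Lstar nu c| * gateaux_norm_deriv (Lstar nu c) (nu k) = y k).
Proof.
move=> sm _; split; first by case=> [[_ h] _].
move=> hk.
set w := Lstar nu c.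
set fh := (fun mu => `|w| * gateaux_norm_deriv w mu).
have [Glin _] := G_lin w sm.
have fhB : bounded_linear_functional fh.
  split; first by move=> a x z; rewrite /fh Glin mulrDr mulrCA.
  by exists `|w| => x; rewrite /fh normrM normr_id ler_wpM2l // G_bound.
have fhI : interp_set nu y fh by split.
have key : forall f, interp_set nu y f -> `|w| <= dual_norm f.
  move=> f [fB fy]; have [w0|w0] := eqVneq w 0.
    rewrite w0 normr0; apply: le_trans (dual_ge f 0 fB _); rewrite ?normr0 //.
  have e1 : f w = \sum_(j < m) c j * y j.
    by rewrite /w /Lstar (linS _ fB.1); apply: eq_bigr => j _; rewrite fy.
  have e2 : fh w = \sum_(j < m) c j * y j.
    by rewrite {1}/w /Lstar (linS _ fhB.1); apply: eq_bigr => j _; rewrite /fh -hk.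
  have fw : f w = `|w| * `|w| by rewrite e1 -e2 /fh (G_self _ sm w0).
  have x1 : `| (`|w|^-1) *: w | <= 1.
    by rewrite normrZ normfV normr_id mulVf // normr_eq0.
  apply: le_trans (dual_ge f _ fB x1).
  by rewrite (linZ _ fB.1) fw mulKf ?normr_id // normr_eq0.
have up : dual_norm fh <= `|w|.
  by apply: dual_le => // x; rewrite /fh normrM normr_id ler_wpM2l // G_bound.
have eq : dual_norm fh = `|w| by apply/le_anti; rewrite up key.
split => //; rewrite eq; apply/le_anti/andP; split.
  apply: lb_le_inf; first by exists (dual_norm fh), fh.
  by move=> _ [f hf <-]; exact: key.
rewrite -[X in _ <= X]eq; apply: ge_inf; last by exists fh.
by exists `|w| => _ [f hf <-]; exact: key.
Qed.
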